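(* Every $4$-unitrade of cardinality $9$ is equivalent to $P=\{\{1,2,5,6\}, \{1,3,5,6\}, \{2,3,5,6\}, \{1,2,4,6\}, \{1,3,4,6\}, \{2,3,4,6\}, \{1,2,4,5\}, \{1,3,4,5\}, \{2,3,4,5\}\}$ (and $P$ is a $4$-unitrade of cardinality $9$).
   Context: A $k$-unitrade on a finite set $V$ is a set $U$ of $k$-element subsets (blocks) of $V$ such that every $(k-1)$-element subset of $V$ is contained in an even number of blocks of $U$. Two collections $U_1$ of subsets of $V_1$ and $U_2$ of subsets of $V_2$ are equivalent if there is an injection $f:V_1\to V_2$ with $U_2=\{f(u): u\in U_1\}$. *)

(* Defs.v *)
From mathcomp Require Import all_boot.
Set Implicit Arguments. Unset Strict Implicit. Unset Printing Implicit Defensive.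

Definition unitrade (V : finType) (k : nat) (U : {set {set V}}) : Prop :=
  (forall B, B \in U -> #|B| = k) /\
  (forall S : {set V}, #|S| = k.-1 -> ~~ odd #|[set B in U | S \subset B]|).

Definition equivalent (V1 V2 : finType) (U1 : {set {set V1}}) (U2 : {set {set V2}}) : Prop :=
  exists f : V1 -> V2, injective f /\ U2 = [set (f @: B) | B : {set V1} in U1].

(* The ground set {1,...,6} is represented by 'I_6, element i being encoded as i-1. *)
Definition pt (i : nat) : 'I_6 := inord i.-1.
Definition blk (a b c d : nat) : {set 'I_6} := [set pt a; pt b; pt c; pt d].

Definition P : {set {set 'I_6}} :=
  [set blk 1 2 5 6; blk 1 3 5 6; blk 2 3 5 6;
       blk 1 2 4 6; blk 1 3 4 6; blk 2 3 4 6;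
       blk 1 2 4 5; blk 1 3 4 5; blk 2 3 4 5].

(* Main.v *)
Require Import Defs.
From mathcomp Require Import all_boot.
Set Implicit Arguments. Unset Strict Implicit. Unset Printing Implicit Defensive.


Section Gen.
Variable V : finType.
Implicit Types (U C : {set {set V}}) (B S : {set V}).

Lemma other_block U B y : unitrade 4 U -> B \in U -> y \in B ->
  exists B', [/\ B' \in U, B' != B, B :\ y \subset B' & y \notin B'].
Proof.
move=> [Hs Hc] HB Hy.
have HS : #|B :\ y| = 4.-1 by move: (cardsD1 y B); rewrite Hy (Hs _ HB) add1n => -[<-].
move: (Hc _ HS).
set X := [set B' in U | B :\ y \subset B'].
have HBX : B \in X by rewrite inE HB subD1set.
case: (boolP [exists B', (B' \in X) && (B' != B)]) => [/existsP [B' /andP [HB' HneB]] _ | Hno].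
  move: HB'; rewrite inE => /andP [HB'U Hsub].
  exists B'; split => //.
  apply/negP => HyB'.
  have HBB : B \subset B'.
    apply/subsetP => z Hz; case: (eqVneq z y) => [->|Hzy] //.
    by apply: (subsetP Hsub); rewrite !inE Hzy.
  move: HneB; suff -> : B' = B by rewrite eqxx.
  apply/eqP; rewrite eq_sym eqEcard HBB /= (Hs _ HB) (Hs _ HB'U) //.
have -> : X = [set B].
  apply/setP => Z; rewrite in_set1; case: (eqVneq Z B) => [->|HZ]; first by rewrite HBX.
  apply/negP => HZX; move/existsP: Hno; apply; exists Z; by rewrite HZX HZ.
by rewrite cards1.
Qed.

Lemma many_blocks U B (A : {set V}) : unitrade 4 U -> B \in U -> A \subset B ->
  #|B :\: A| <= #|[set B' in U | (B' != B) && (A \subset B')]|.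
Proof.
move=> HU HB HAB.
pose phi y := odflt set0 [pick B' | [&& B' \in U, B' != B, B :\ y \subset B' & y \notin B']].
have Hphi y : y \in B -> [/\ phi y \in U, phi y != B, B :\ y \subset phi y & y \notin phi y].
  move=> Hy; rewrite /phi; case: pickP => [B' /and4P [] //|Hn].
  have [B' [H1 H2 H3 H4]] := other_block HU HB Hy.
  by move: (Hn B'); rewrite H1 H2 H3 H4.
have Hinj : {in B :\: A &, injective phi}.
  move=> y y' /setDP [Hy _] /setDP [Hy' _] Heq.
  case: (eqVneq y y') => // Hne.
  have [_ _ Hs Hn] := Hphi y Hy.
  have [_ _ Hs' _] := Hphi y' Hy'.
  have : y \in phi y' by apply: (subsetP Hs'); rewrite !inE Hne Hy.
  by rewrite -Heq (negbTE Hn).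
rewrite -(card_in_imset Hinj); apply: subset_leq_card; apply/subsetP => Z /imsetP [y Hy ->].
have [Hy1 Hy2] := setDP Hy.
have [H1 H2 H3 H4] := Hphi y Hy1.
rewrite inE H1 H2 /=; apply: subset_trans H3; apply/subsetP => z Hz; rewrite !inE (subsetP HAB _ Hz) andbT.
by apply/eqP => Hzy; move: Hy2; rewrite -Hzy Hz.
Qed.

Lemma min5 U : unitrade 4 U -> U != set0 -> 5 <= #|U|.
Proof.
move=> HU /set0Pn [B HB].
have := many_blocks HU HB (sub0set B); rewrite setD0 HU.1 // => H.
rewrite (cardsD1 B U) HB ltnS; apply: leq_trans H _; apply: subset_leq_card.
by apply/subsetP => Z; rewrite !inE => /andP [HZ /andP [HZB _]]; rewrite HZ HZB.
Qed.

Lemma deg4 U B v : unitrade 4 U -> B \in U -> v \in B ->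
  4 <= #|[set B' in U | v \in B']|.
Proof.
move=> HU HB Hv.
have HvB : [set v] \subset B by rewrite sub1set.
have := many_blocks HU HB HvB.
have -> : #|B :\: [set v]| = 3 by move: (cardsD1 v B); rewrite Hv (HU.1 _ HB) add1n => -[<-].
move=> H.
rewrite (cardsD1 B) inE HB Hv ltnS; apply: leq_trans H _; apply: subset_leq_card.
by apply/subsetP => Z; rewrite !inE sub1set => /andP [-> /andP [-> ->]].
Qed.

Lemma unitrade_sub U C : unitrade 4 U -> unitrade 4 C -> C \subset U -> unitrade 4 (U :\: C).
Proof.
move=> [HUs HUc] [HCs HCc] HCU; split.
  by move=> B /setDP [HB _]; apply: HUs.
move=> S HS; move: (HUc S HS) (HCc S HS).
rewrite -(cardsID C [set B in U | S \subset B]).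
have -> : [set B in U | S \subset B] :&: C = [set B in C | S \subset B].
  apply/setP => Z; rewrite !inE; case HZ: (Z \in C); rewrite ?andbF ?andbT //=.
  by rewrite (subsetP HCU _ HZ).
have -> : [set B in U | S \subset B] :\: C = [set B in U :\: C | S \subset B].
  by apply/setP => Z; rewrite !inE; case: (Z \in C); rewrite ?andbF ?andbT.
by rewrite oddD; case: (odd _); case: (odd _).
Qed.

End Gen.


Section Transfer.
Variables (V1 V2 : finType) (f : V1 -> V2) (D : {set V1}).
Hypothesis Hf : {in D &, injective f}.

Lemma imset_subE (X Y : {set V1}) : X \subset D -> Y \subset D ->
  (f @: X \subset f @: Y) = (X \subset Y).
Proof.
move=> HX HY; apply/idP/idP; last exact: imsetS.
move=> H; apply/subsetP => x Hx.
have /imsetP [y Hy Hxy] := subsetP H _ (imset_f f Hx).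
by rewrite (Hf (subsetP HX _ Hx) (subsetP HY _ Hy) Hxy).
Qed.

Lemma imset_inj_on (X Y : {set V1}) : X \subset D -> Y \subset D -> f @: X = f @: Y -> X = Y.
Proof.
move=> HX HY E; apply/eqP; rewrite eqEsubset -(imset_subE HX HY) -(imset_subE HY HX) E.
by rewrite subxx.
Qed.

Lemma card_imset_on (X : {set V1}) : X \subset D -> #|f @: X| = #|X|.
Proof.
move=> HX; apply: card_in_imset => x y Hx Hy; apply: Hf; exact: (subsetP HX).
Qed.

Lemma unitrade_img (U : {set {set V1}}) :
  (forall B : {set V1}, B \in U -> B \subset D) ->
  unitrade 4 U -> unitrade 4 [set (f @: B) | B : {set V1} in U] /\ #|[set (f @: B) | B : {set V1} in U]| = #|U|.
Proof.
move=> HD [Hs Hc].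
have Hinj : {in U &, injective (fun B : {set V1} => f @: B)}.
  by move=> X Y HX HY; apply: imset_inj_on; apply: HD.
split; last exact: card_in_imset.
split.
  by move=> B2 /imsetP [B HB ->]; rewrite card_imset_on ?HD // Hs.
move=> S2 HS2.
case: (boolP (S2 \subset f @: D)) => HS2D.
  pose S1 := D :&: f @^-1: S2.
  have HS1D : S1 \subset D by apply: subsetIl.
  have ES : f @: S1 = S2.
    apply/setP => y; apply/imsetP/idP => [[x] |Hy].
      by rewrite !inE => /andP [_ Hx] ->.
    have /imsetP [x Hx Exy] := subsetP HS2D _ Hy.
    by exists x => //; rewrite !inE Hx -Exy Hy.
  have HS1 : #|S1| = 4.-1 by rewrite -HS2 -ES card_imset_on.
  have -> : [set B2 in [set (f @: B) | B : {set V1} in U] | S2 \subset B2] =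
            [set (f @: B) | B : {set V1} in [set B in U | S1 \subset B]].
    apply/setP => B2; apply/idP/imsetP.
      rewrite inE => /andP [/imsetP [B HB ->]].
      rewrite -ES imset_subE ?(HD _ HB) // => H.
      by exists B => //; rewrite inE HB.
    move=> [B /setIdP [HB HSB] ->].
    by rewrite inE imset_f //= -ES imset_subE ?(HD _ HB).
  rewrite card_in_imset; first exact: Hc.
  by move=> X Y; rewrite !inE => /andP [HX _] /andP [HY _]; apply: imset_inj_on; apply: HD.
have -> : [set B2 in [set (f @: B) | B : {set V1} in U] | S2 \subset B2] = set0.
  apply/setP => B2; rewrite !inE; apply/negP => /andP [/imsetP [B HB ->] H].
  by move: HS2D; rewrite (subset_trans H) // imsetS // HD.
by rewrite cards0.
Qed.

End Transfer.

Lemma sum_deg (V : finType) (U : {set {set V}}) (W : {set V}) :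
  (forall B : {set V}, B \in U -> B \subset W) ->
  \sum_(v in W) #|[set B in U | v \in B]| = \sum_(B in U) #|B|.
Proof.
move=> HW.
have E1 v : #|[set B in U | v \in B]| = \sum_(B in U) (v \in B).
  rewrite -sum1_card [RHS]big_mkcond [LHS]big_mkcond /=; apply: eq_bigr => B _.
  by rewrite !inE; case: (B \in U); case: (v \in B).
under eq_bigr do rewrite E1.
rewrite exchange_big; apply: eq_bigr => B HB.
rewrite -sum1_card [RHS]big_mkcond [LHS]big_mkcond /=; apply: eq_bigr => v _.
case Hv: (v \in B); last by case: (v \in W).
by rewrite (subsetP (HW _ HB) _ Hv).
Qed.


Definition toS n (b : seq nat) : {set 'I_n} := [set i : 'I_n | val i \in b].
Definition csub (t b : seq nat) := all (fun x => has (eqn x) b) t.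
Definition ltall n (b : seq nat) := all (fun x => x < n) b.
Definition cnt (ch : seq (seq nat)) t := count (csub t) ch.
Definition sub3 (b : seq nat) : seq (seq nat) := [seq rem x b | x <- b].
Definition odds ch := undup [seq t <- flatten (map sub3 ch) | odd (cnt ch t)].
Definition valid n (ch : seq (seq nat)) := all (fun b => sorted ltn b && ltall n b) ch.

Lemma has_eqn x b : has (eqn x) b = (x \in b).
Proof. by rewrite -has_pred1; apply: eq_has => y; rewrite /= eq_sym. Qed.

Lemma toS_cons n x t (Hx : x < n) : toS n (x :: t) = Ordinal Hx |: toS n t.
Proof. by apply/setP => i; rewrite !inE -val_eqE. Qed.

Lemma toS_nil n : toS n [::] = set0.
Proof. by apply/setP => i; rewrite !inE. Qed.

Lemma card_toS n b : uniq b -> ltall n b -> #|toS n b| = size b.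
Proof.
elim: b => [|x t IH] /=; first by rewrite toS_nil cards0.
move=> /andP [Hxt Hu] /andP [Hx Ht].
rewrite (toS_cons _ Hx) cardsU1 IH // inE /= (negbTE Hxt).
by [].
Qed.

Lemma toS_sub n t b : ltall n t -> (toS n t \subset toS n b) = csub t b.
Proof.
move=> /allP Ht; apply/subsetP/allP => H x Hx.
  have := H (Ordinal (Ht _ Hx)); rewrite !inE /= has_eqn; exact.
by move: Hx; rewrite !inE => /H; rewrite has_eqn.
Qed.

Lemma toS_eq n t t' : t =i t' -> toS n t = toS n t'.
Proof. by move=> E; apply/setP => i; rewrite !inE E. Qed.

Lemma toS_inj n t t' : sorted ltn t -> sorted ltn t' -> ltall n t -> ltall n t' ->
  toS n t = toS n t' -> t = t'.
Proof.
move=> Hs Hs' /allP Ht /allP Ht' E.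
apply: (irr_sorted_eq ltn_trans ltnn Hs Hs') => x.
apply/idP/idP => Hx.
  have : Ordinal (Ht _ Hx) \in toS n t by rewrite inE.
  by rewrite E inE.
have : Ordinal (Ht' _ Hx) \in toS n t' by rewrite inE.
by rewrite -E inE.
Qed.

Lemma toS_rem n b (y : 'I_n) : uniq b -> toS n (rem (val y) b) = toS n b :\ y.
Proof.
move=> Hu; apply/setP => i; rewrite !inE (mem_rem_uniq _ Hu) !inE val_eqE.
by [].
Qed.

Lemma card_filter_seq (T : finType) (s : seq T) (P : pred T) :
  uniq s -> #|[set B in [set x in s] | P B]| = count P s.
Proof.
move=> Hu.
have -> : [set B in [set x in s] | P B] = [set x in filter P s].
  by apply/setP => x; rewrite !inE mem_filter andbC.
by rewrite cardsE (card_uniqP _) ?filter_uniq // size_filter.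
Qed.

Lemma cnt_card n ch t : uniq (map (toS n) ch) -> ltall n t ->
  cnt ch t = #|[set B in [set x in map (toS n) ch] | toS n t \subset B]|.
Proof.
move=> Hu Ht; rewrite card_filter_seq // count_map /cnt.
by apply: eq_count => b /=; rewrite toS_sub.
Qed.

Lemma valid_mem n ch b : valid n ch -> b \in ch -> sorted ltn b /\ ltall n b.
Proof. by move=> /allP H /H /andP. Qed.

Lemma sorted_uniq_ltn b : sorted ltn b -> uniq b.
Proof. by rewrite ltn_sorted_uniq_leq => /andP []. Qed.

Lemma sub3_props n ch t : valid n ch -> t \in flatten (map sub3 ch) ->
  exists2 b, b \in ch & exists2 x, x \in b & t = rem x b.
Proof.
move=> Hv /flattenP [s /mapP [b Hb ->] /mapP [x Hx ->]].
by exists b => //; exists x.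
Qed.

Lemma rem_props n b x : sorted ltn b -> ltall n b -> sorted ltn (rem x b) /\ ltall n (rem x b).
Proof.
move=> Hs /allP Hl; split; first exact: (subseq_sorted ltn_trans (rem_subseq x b)).
by apply/allP => y Hy; apply: Hl; apply: (mem_subseq (rem_subseq x b)).
Qed.

Lemma noodd n ch : valid n ch -> uniq (map (toS n) ch) ->
  (forall b, b \in ch -> size b = 4) -> odds ch = [::] ->
  forall S : {set 'I_n}, #|S| = 3 ->
  ~~ odd #|[set B in [set x in map (toS n) ch] | S \subset B]|.
Proof.
move=> Hv Hu Hsz Ho S HS.
rewrite card_filter_seq // count_map; apply/negP => Hodd.
have : has (fun b => S \subset toS n b) ch.
  rewrite has_count; move: Hodd; case: count => //.
case/hasP => b Hb HSb.
have [Hbs Hbl] := valid_mem Hv Hb.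
have Hcb : #|toS n b| = 4 by rewrite card_toS ?sorted_uniq_ltn // Hsz.
have := cardsID S (toS n b); rewrite (setIidPr HSb) HS Hcb => /eqP.
rewrite -{1}[4]/(3 + 1) eqn_add2l => /cards1P [y Ey].
have Hy : y \in toS n b :\: S by rewrite Ey set11.
move: Hy => /setDP [Hyb HyS].
have ES : S = toS n b :\ y.
  apply/eqP; rewrite eqEcard; apply/andP; split.
    apply/subsetP => z Hz; rewrite in_setD1 (subsetP HSb _ Hz) andbT.
    by apply/eqP => Ezy; move: HyS; rewrite -Ezy Hz.
  by move: (cardsD1 y (toS n b)); rewrite Hyb Hcb HS add1n => -[<-].
have Ht : (rem (val y) b) \in flatten (map sub3 ch).
  apply/flattenP; exists (sub3 b); first exact: map_f.
  apply: map_f; by move: Hyb; rewrite inE.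
have [_ Htl] := rem_props (val y) Hbs Hbl.
have : rem (val y) b \in odds ch.
  rewrite mem_undup mem_filter Ht andbT (cnt_card Hu Htl) toS_rem ?sorted_uniq_ltn // -ES.
  by rewrite card_filter_seq // count_map.
by rewrite Ho.
Qed.


Definition Pl : seq (seq nat) :=
  [:: [:: 0;1;4;5]; [:: 0;2;4;5]; [:: 1;2;4;5];
      [:: 0;1;3;5]; [:: 0;2;3;5]; [:: 1;2;3;5];
      [:: 0;1;3;4]; [:: 0;2;3;4]; [:: 1;2;3;4]].

Lemma inordE (m : nat) (i : 'I_m.+1) x : x < m.+1 -> (i == inord x) = (val i == x).
Proof. by move=> Hx; rewrite -val_eqE /= inordK. Qed.

Lemma blkE a b c d : a.-1 < 6 -> b.-1 < 6 -> c.-1 < 6 -> d.-1 < 6 ->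
  blk a b c d = toS 6 [:: a.-1; b.-1; c.-1; d.-1].
Proof.
by move=> Ha Hb Hc Hd; apply/setP => i; rewrite /blk /pt !inE !inordE // -!orbA.
Qed.

Lemma P_eq : P = [set x in map (toS 6) Pl].
Proof.
rewrite /P !blkE //; apply/setP => B; rewrite !inE.
by rewrite -!orbA.
Qed.

Lemma Pl_valid : valid 6 Pl.
Proof. by []. Qed.

Lemma Pl_uniq : uniq (map (toS 6) Pl).
Proof.
rewrite map_inj_in_uniq //.
move=> b b' Hb Hb' E.
have [Hs Hl] := valid_mem Pl_valid Hb.
have [Hs' Hl'] := valid_mem Pl_valid Hb'.
exact: toS_inj Hs Hs' Hl Hl' E.
Qed.

Lemma card_P : #|P| = 9.
Proof. by rewrite P_eq cardsE (card_uniqP Pl_uniq) size_map. Qed.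

Lemma P_unitrade : unitrade 4 P.
Proof.
have Hsz : forall b, b \in Pl -> size b = 4.
  have H : all (fun b => size b == 4) Pl by []. by move=> b Hb; apply/eqP; exact: (allP H b Hb).
rewrite P_eq; split.
  move=> B; rewrite inE => /mapP [b Hb ->]; have [Hs Hl] := valid_mem Pl_valid Hb.
  by rewrite card_toS ?sorted_uniq_ltn // Hsz.
apply: noodd Pl_valid Pl_uniq Hsz _.
by vm_compute.
Qed.

Definition findf (ch : seq (seq nat)) : seq nat :=
  let W := sort leq (undup (flatten ch)) in
  let w0 := head 0 W in
  let side2 := [seq w <- W | [seq z <- W | (z != w0) && (z != w)] \in ch] in
  [seq w <- W | w \notin side2] ++ side2.

Definition leafok ch :=
  let fs := findf ch in
  (size fs == 6) && uniq fs && all (fun x => x < 9) fs &&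
  all (fun pb => sort leq (map (nth 0 fs) pb) \in ch) Pl.

Lemma leaf_ok ch : leafok ch ->
  exists f9 : 'I_6 -> 'I_9, injective f9 /\
    [set (f9 @: B) | B : {set 'I_6} in P] \subset [set x in map (toS 9) ch].
Proof.
rewrite /leafok; set fs := findf ch.
move=> /andP [/andP [/andP [/eqP Hsz Hu] /allP Hlt] /allP Hall].
pose f9 (i : 'I_6) : 'I_9 := inord (nth 0 fs i).
have Hnth (i : 'I_6) : nth 0 fs i < 9 by apply: Hlt; apply: mem_nth; rewrite Hsz.
have Hf9 i : val (f9 i) = nth 0 fs i by rewrite /f9 /= inordK.
exists f9; split.
  move=> i j E; apply: val_inj; have := congr1 val E; rewrite !Hf9 => /eqP.
  by rewrite nth_uniq ?Hsz // => /eqP.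
have Himg pb : ltall 6 pb -> f9 @: toS 6 pb = toS 9 (map (nth 0 fs) pb).
  move=> /allP Hpb; apply/setP => j; apply/imsetP/idP.
    by move=> [i]; rewrite !inE => Hi ->; rewrite Hf9 map_f.
  rewrite inE => /mapP [k Hk Ej].
  exists (Ordinal (Hpb _ Hk)); first by rewrite inE.
  by apply: val_inj; rewrite Hf9.
apply/subsetP => B' /imsetP [B]; rewrite P_eq inE => /mapP [pb Hpb ->] ->.
have [_ Hl] := valid_mem Pl_valid Hpb.
rewrite Himg // -(@toS_eq 9 _ _ (mem_sort leq (map (nth 0 fs) pb))) inE.
by apply: map_f; apply: Hall.
Qed.


Fixpoint allb (f : nat -> bool) (s : seq nat) : bool :=
  if s is x :: s' then (if f x then allb f s' else false) else true.

Lemma allbE f s : allb f s = all f s.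
Proof. by elim: s => //= x s ->; case: (f x). Qed.

Fixpoint search (fuel : nat) (ch : seq (seq nat)) : bool :=
  if fuel is f.+1 then
    match odds ch with
    | t :: o' =>
      if 9 <= size ch then true else
      if 4 * (9 - size ch) < size (t :: o') then true else
      allb (fun x => if has (eqn x) t then true else
                     if has (csub (x :: t)) ch then true else
                     search f (sort leq (x :: t) :: ch)) (iota 0 9)
    | [::] => if size ch != 9 then true else leafok ch
    end
  else false.


Lemma searchS f ch : search f.+1 ch =
    match odds ch with
    | t :: o' =>
      if 9 <= size ch then true else
      if 4 * (9 - size ch) < size (t :: o') then true else
      allb (fun x => if has (eqn x) t then true else
                     if has (csub (x :: t)) ch then true else
                     search f (sort leq (x :: t) :: ch)) (iota 0 9)
    | [::] => if size ch != 9 then true else leafok ch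
    end.
Proof. by []. Qed.

Lemma card_bigcup_le (T I : finType) (A : {pred I}) (F : I -> {set T}) :
  #|\bigcup_(i in A) F i| <= \sum_(i in A) #|F i|.
Proof.
apply: (big_ind2 (fun (X : {set T}) m => #|X| <= m)) => //; first by rewrite cards0.
move=> X m Y k HX HY; rewrite cardsU; apply: leq_trans (leq_subr _ _) _.
exact: leq_add.
Qed.

Section Sound.
Variable U9 : {set {set 'I_9}}.
Hypothesis HU : unitrade 4 U9.
Hypothesis H9 : #|U9| = 9.

Definition goal9 := exists f9 : 'I_6 -> 'I_9, injective f9 /\
  U9 = [set (f9 @: B) | B : {set 'I_6} in P].

Definition inv ch := [/\ valid 9 ch, uniq (map (toS 9) ch),
  {subset map (toS 9) ch <= U9} & 0 < size ch].

Lemma inv_size ch b : inv ch -> b \in ch -> size b = 4.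
Proof.
move=> [Hv Hu Hsub _] Hb.
have [Hs Hl] := valid_mem Hv Hb.
rewrite -(@card_toS 9 b) ?sorted_uniq_ltn //; apply: HU.1; apply: Hsub; exact: map_f.
Qed.

Lemma inv_cardC ch : inv ch -> #|[set x in map (toS 9) ch]| = size ch.
Proof. by move=> [_ Hu _ _]; rewrite cardsE (card_uniqP Hu) size_map. Qed.

Lemma inv_subC ch : inv ch -> [set x in map (toS 9) ch] \subset U9.
Proof. by move=> [_ _ Hsub _]; apply/subsetP => B; rewrite inE => /Hsub. Qed.

Lemma odds_props ch t : inv ch -> t \in odds ch ->
  [/\ sorted ltn t, ltall 9 t, size t = 3 & odd (cnt ch t)].
Proof.
move=> Hi; rewrite mem_undup mem_filter => /andP [Hodd Ht].
have [Hv _ _ _] := Hi.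
have [b Hb [x Hx Et]] := sub3_props Hv Ht.
have [Hs Hl] := valid_mem Hv Hb.
have [Hs' Hl'] := rem_props x Hs Hl.
subst t; split => //; by rewrite size_rem // (inv_size Hi Hb).
Qed.

Lemma missing ch t : inv ch -> ltall 9 t -> size t = 3 -> sorted ltn t -> odd (cnt ch t) ->
  exists2 B, B \in U9 & (B \notin [set x in map (toS 9) ch]) && (toS 9 t \subset B).
Proof.
move=> Hi Hl Hsz Hs Hodd.
have [Hv Hu _ _] := Hi.
have HCU := inv_subC Hi.
move: Hodd; rewrite (cnt_card Hu Hl).
set C := [set x in map (toS 9) ch] in HCU *.
move=> Hodd.
case: (boolP [exists B, [&& B \in U9, B \notin C & toS 9 t \subset B]]).
  by move=> /existsP [B /and3P [H1 H2 H3]]; exists B => //; rewrite H2 H3.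
move=> Hno; exfalso.
have Hct : #|toS 9 t| = 4.-1 by rewrite card_toS ?sorted_uniq_ltn.
have := HU.2 _ Hct.
have -> : [set B in U9 | toS 9 t \subset B] = [set B in C | toS 9 t \subset B].
  apply/setP => B; rewrite !inE; case HBt: (toS 9 t \subset B); rewrite ?andbF ?andbT //=.
  case HBC: (B \in [seq toS 9 i | i <- ch]).
    by apply: (subsetP HCU); rewrite inE.
  apply/negP => HB; move/existsP: Hno; apply; exists B; by rewrite HB HBt inE HBC.
by rewrite Hodd.
Qed.

Lemma inv_cardD ch : inv ch -> #|U9 :\: [set x in map (toS 9) ch]| = 9 - size ch.
Proof.
move=> Hi; have := cardsID [set x in map (toS 9) ch] U9.
rewrite (setIidPr (inv_subC Hi)) (inv_cardC Hi) => E.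
by rewrite -[in RHS]H9 -E addKn.
Qed.

Lemma prune ch : inv ch -> 4 * (9 - size ch) < size (odds ch) -> False.
Proof.
move=> Hi.
have Hou : uniq (map (toS 9) (odds ch)).
  rewrite map_inj_in_uniq ?undup_uniq // => t t' Ht Ht' E.
  have [Hs Hl _ _] := odds_props Hi Ht.
  have [Hs' Hl' _ _] := odds_props Hi Ht'.
  exact: toS_inj Hs Hs' Hl Hl' E.
set D := U9 :\: [set x in map (toS 9) ch].
have HO : [set x in map (toS 9) (odds ch)] \subset
          \bigcup_(B in D) [set S : {set 'I_9} | S \subset B & #|S| == 3].
  apply/subsetP => S; rewrite inE => /mapP [t Ht ->].
  have [Hs Hl Hsz Hodd] := odds_props Hi Ht.
  have [B HB /andP [HBC HtB]] := missing Hi Hl Hsz Hs Hodd.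
  apply/bigcupP; exists B; first by rewrite inE HB HBC.
  by rewrite inE HtB card_toS ?sorted_uniq_ltn ?Hsz.
have := subset_leq_card HO; rewrite cardsE (card_uniqP Hou) size_map => H1.
have := leq_trans H1 (card_bigcup_le _ _).
have -> : \sum_(B in D) #|[set S : {set 'I_9} | S \subset B & #|S| == 3]| = \sum_(B in D) 4.
  apply: eq_bigr => B; rewrite inE => /andP [_ HB].
  by rewrite cards_draws (HU.1 _ HB).
rewrite sum_nat_const (inv_cardD Hi) mulnC => H2 H3.
by move: (leq_trans H3 H2); rewrite ltnn.
Qed.

Lemma search_sound fuel ch : search fuel ch -> inv ch -> goal9.
Proof.
elim: fuel ch => [|f IH] ch; first by [].
rewrite searchS => Hsearch Hi.
have [Hv Hu Hsub Hpos] := Hi.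
have HCU := inv_subC Hi.
move: Hsearch; case Ho: (odds ch) => [|t o'].
  set C := [set x in map (toS 9) ch] in HCU *.
  have HCun : unitrade 4 C.
    split; first by move=> B HB; apply: HU.1; apply: (subsetP HCU).
    move=> S HS; apply: (noodd Hv Hu _ Ho) => // b Hb; exact: inv_size Hi Hb.
  have HDun := unitrade_sub HU HCun HCU.
  have HD0 : U9 :\: C = set0.
    apply/eqP; apply/negPn/negP => HD.
    have H5 := min5 HDun HD.
    have HC0 : C != set0.
      apply/set0Pn; case: ch Ho Hpos {Hi Hv Hu Hsub HCU HCun HDun H5 HD IH} @C => // b ch' _ _.
      by exists (toS 9 b); rewrite inE mem_head.
    have H5' := min5 HCun HC0.
    have := cardsID C U9; rewrite (setIidPr HCU) H9 => E.
    by move: (leq_add H5' H5); rewrite E.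
  have EUC : U9 = C.
    by apply/eqP; rewrite eqEsubset HCU andbT -setD_eq0 HD0.
  have Hsz : size ch = 9 by rewrite -(inv_cardC Hi) -/C -EUC H9.
  rewrite Hsz eqxx /= => /leaf_ok [f9 [Hinj Himg]].
  exists f9; split => //.
  have Himg' : [set (f9 @: B) | B : {set 'I_6} in P] \subset U9 by rewrite EUC; exact: Himg.
  apply/eqP; rewrite eq_sym eqEcard Himg' /=.
  by rewrite H9 card_in_imset ?card_P // => X Y _ _; apply: imset_inj.
have Ht : t \in odds ch by rewrite Ho mem_head.
have [Hts Htl Htsz Hodd] := odds_props Hi Ht.
have [B HB /andP [HBC HtB]] := missing Hi Htl Htsz Hts Hodd.
case: ifP => [H9le _|_].
  have Hs : B |: [set x in map (toS 9) ch] \subset U9 by rewrite subUset sub1set HB HCU.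
  have := subset_leq_card Hs; rewrite cardsU1 HBC (inv_cardC Hi) H9 => H1.
  by move: (leq_trans H9le H1).
case: ifP => [Hpr _|_].
  by exfalso; apply: (prune Hi); rewrite Ho.
rewrite allbE => /allP Hall.
have HcB : #|B| = 4 := HU.1 _ HB.
have Htu : uniq t by apply: sorted_uniq_ltn.
have Hct : #|toS 9 t| = 3 by rewrite card_toS.
have [y Hy] : exists y, y \in B :\: toS 9 t.
  apply/set0Pn; rewrite -card_gt0.
  have := cardsID (toS 9 t) B; rewrite (setIidPr HtB) HcB Hct => E.
  by rewrite -(leq_add2l 3) E.
move: Hy => /setDP [HyB HytS].
have Hxt : val y \notin t by move: HytS; rewrite inE.
have Hl' : ltall 9 (val y :: t) by rewrite /ltall /= ltn_ord.
have EB : toS 9 (val y :: t) = B.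
  rewrite (toS_cons _ (ltn_ord y)).
  have -> : Ordinal (ltn_ord y) = y by apply: val_inj.
  apply/eqP; rewrite eqEcard HcB cardsU1 HytS Hct andbT.
  by rewrite subUset sub1set HyB HtB.
have := Hall (val y); rewrite mem_iota /= add0n ltn_ord => /(_ isT).
rewrite has_eqn (negbTE Hxt).
case: hasP => [[b Hb Hcs]|_].
  exfalso; move: HBC; rewrite inE => /negP; apply.
  have [Hbs Hbl] := valid_mem Hv Hb.
  have Hcb : #|toS 9 b| = 4 by rewrite card_toS ?sorted_uniq_ltn // (inv_size Hi Hb).
  have HBb : B \subset toS 9 b by rewrite -EB toS_sub ?Hcs.
  have -> : B = toS 9 b by apply/eqP; rewrite eqEcard HBb Hcb HcB.
  exact: map_f.
move=> Hs; apply: (IH _ Hs).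
have ES : toS 9 (sort leq (val y :: t)) = B by rewrite -EB; apply: toS_eq; apply: mem_sort.
split => //=.
- rewrite /valid /= -/(valid 9 ch) Hv andbT ltn_sorted_uniq_leq sort_uniq sort_sorted ?andbT /=; last exact: leq_total.
  rewrite Hxt Htu /=; apply/allP => z; rewrite mem_sort; exact: (allP Hl').
- by rewrite ES Hu andbT; move: HBC; rewrite inE.
- by move=> Z; rewrite ES inE => /orP [/eqP ->|]; [exact: HB | exact: Hsub].
Qed.

End Sound.


Lemma search_root : search 10 [:: [:: 0; 1; 2; 3]].
Proof. by vm_compute. Qed.

Lemma concrete (U9 : {set {set 'I_9}}) : unitrade 4 U9 -> #|U9| = 9 ->
  toS 9 [:: 0; 1; 2; 3] \in U9 -> goal9 U9.
Proof.
move=> HU H9 H0.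
apply: (search_sound HU H9 search_root).
split.
- by [].
- by [].
- by move=> Z; rewrite inE => /eqP ->.
- by [].
Qed.


Lemma imset_comp' (A B C : finType) (f : B -> C) (g : A -> B) (X : {set A}) :
  [set f (g x) | x in X] = f @: (g @: X).
Proof.
apply/setP => z; apply/imsetP/imsetP => [[x Hx ->]|[y /imsetP [x Hx ->] ->]].
  by exists (g x) => //; apply: imset_f.
by exists x.
Qed.

Theorem main_B (V : finType) (U : {set {set V}}) :
  unitrade 4 U -> #|U| = 9 -> equivalent P U.
Proof.
move=> HU HU9.
have /set0Pn [B0 HB0] : U != set0 by rewrite -card_gt0 HU9.
pose W := \bigcup_(B in U) B.
have HW : forall B : {set V}, B \in U -> B \subset W by move=> B HB; apply: bigcup_sup.
have HW9 : #|W| <= 9.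
  have H1 : \sum_(v in W) 4 <= \sum_(v in W) #|[set B in U | v \in B]|.
    apply: leq_sum => v /bigcupP [B HB Hv]; exact: deg4 HU HB Hv.
  move: H1; rewrite sum_deg // sum_nat_const.
  have -> : \sum_(B in U) #|B| = \sum_(B in U) 4 by apply: eq_bigr => B HB; apply: HU.1.
  by rewrite sum_nat_const HU9 leq_pmul2r.
have HB0W := HW _ HB0.
have HcB0 : #|B0| = 4 := HU.1 _ HB0.
have [x0 Hx0] : exists x0, x0 \in B0 by apply/set0Pn; rewrite -card_gt0 HcB0.
pose s := enum B0 ++ enum (W :\: B0).
have Hsu : uniq s.
  rewrite cat_uniq !enum_uniq /= andbT; apply/hasPn => z; rewrite !mem_enum inE.
  by move=> /andP [Hz _].
have Hsm z : (z \in s) = (z \in W).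
  rewrite mem_cat !mem_enum inE; case Hz: (z \in B0); last by [].
  by rewrite (subsetP HB0W _ Hz).
have Hss : size s = #|W|.
  rewrite size_cat -!cardE; have := cardsID B0 W; by rewrite (setIidPr HB0W).
pose e (v : V) : 'I_9 := inord (index v s).
have He v : v \in W -> val (e v) = index v s.
  move=> Hv; rewrite /e /= inordK //; apply: leq_trans HW9; rewrite -Hss index_mem Hsm.
  by [].
have Hinj : {in W &, injective e}.
  move=> v w Hv Hw E; have := congr1 val E; rewrite !He // => Ei.
  by rewrite -(nth_index x0 (_ : v \in s)) ?Hsm // Ei nth_index ?Hsm.
pose U9 := [set (e @: B) | B : {set V} in U].
have [HU9u HU9c] := unitrade_img Hinj HW HU.
have Hroot : toS 9 [:: 0; 1; 2; 3] \in U9.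
  have -> : toS 9 [:: 0; 1; 2; 3] = e @: B0.
    apply/eqP; rewrite eq_sym eqEcard (card_imset_on Hinj HB0W) HcB0 card_toS //.
    rewrite leqnn andbT; apply/subsetP => j /imsetP [v Hv ->].
    rewrite inE He ?(subsetP HB0W) // index_cat mem_enum Hv.
    have : index v (enum B0) < 4 by rewrite -HcB0 cardE index_mem mem_enum.
    by case: (index v (enum B0)) => [|[|[|[|]]]].
  exact: imset_f.
have [f9 [Hf9 EU9]] := concrete HU9u (etrans HU9c HU9) Hroot.
pose pre (j : 'I_9) : V := nth x0 s j.
have Hpre v : v \in W -> pre (e v) = v by move=> Hv; rewrite /pre He // nth_index ?Hsm.
have Hcov (i : 'I_6) : exists2 Bp, Bp \in P & i \in Bp.
  have : val i \in [:: 0; 1; 4; 5] ++ [:: 0; 2; 3; 4].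
    case: i => [[|[|[|[|[|[|m]]]]]] Hm] //=; by rewrite !ltnS ltn0 in Hm.
  rewrite mem_cat => /orP [Hi|Hi].
    exists (toS 6 [:: 0; 1; 4; 5]); last by rewrite inE.
    by rewrite P_eq inE; apply: map_f; rewrite inE eqxx.
  exists (toS 6 [:: 0; 2; 3; 4]); last by rewrite inE.
  by rewrite P_eq inE; apply: map_f; rewrite !inE eqxx !orbT.
have Hrng (i : 'I_6) : exists2 v, v \in W & f9 i = e v.
  have [Bp HBp Hi] := Hcov i.
  have : f9 @: Bp \in U9 by rewrite /U9 EU9; apply: imset_f.
  move=> /imsetP [B HB EB].
  have : f9 i \in e @: B by rewrite -EB; apply: imset_f.
  move=> /imsetP [v Hv ->]; exists v => //; exact: (subsetP (HW _ HB)).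
exists (fun i => pre (f9 i)); split.
  move=> i j E; apply: Hf9.
  have [v Hv Ev] := Hrng i; have [w Hw Ew] := Hrng j.
  by move: E; rewrite Ev Ew !Hpre // => ->.
have Hback B : B \in U -> pre @: (e @: B) = B.
  move=> HB; rewrite -imset_comp' -[RHS]imset_id; apply: eq_in_imset => v Hv /=.
  by apply: Hpre; apply: (subsetP (HW _ HB)).
have Hcomp (Bp : {set 'I_6}) : [set pre (f9 i) | i in Bp] = pre @: (f9 @: Bp).
  by rewrite imset_comp'.
apply/setP => B; apply/idP/imsetP.
  move=> HB; have : e @: B \in U9 by apply: imset_f.
  rewrite /U9 EU9 => /imsetP [Bp HBp EB].
  by exists Bp => //; rewrite Hcomp -EB Hback.
move=> [Bp HBp ->].
have : f9 @: Bp \in U9 by rewrite /U9 EU9; apply: imset_f.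
move=> /imsetP [B' HB' EB']; by rewrite Hcomp EB' Hback.
Qed.


Theorem proposition13 :
  (unitrade 4 P /\ #|P| = 9) /\
  (forall (V : finType) (U : {set {set V}}),
      unitrade 4 U -> #|U| = 9 -> equivalent P U).
Proof.
split; first by split; [exact: P_unitrade | exact: card_P].
exact: main_B.
Qed.
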